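(* For each $d\ge0$ and standard basis $\{v_i\}_{i=0}^d$ of $\mathcal V(d)$, $$Pv_0=\sum_{i=0}^d v_i,\qquad P^2v_0=\sum_{i=0}^d Pv_i,\qquad (-1)^dv_0=\sum_{i=0}^d P^2v_i.$$
   Context: $\mathbb F$ is a field of characteristic zero, $\mathfrak{sl}_2$ the Lie algebra of $2\times2$ trace-zero matrices over $\mathbb F$, with $e=\begin{pmatrix}0&1\\0&0\end{pmatrix}$, $f=\begin{pmatrix}0&0\\1&0\end{pmatrix}$, $h=\begin{pmatrix}1&0\\0&-1\end{pmatrix}$. $\mathcal V(d)$ is the $(d+1)$-dimensional irreducible $\mathfrak{sl}_2$-module; a standard basis $\{v_i\}_{i=0}^d$ satisfies $h.v_i=(d-2i)v_i$, $f.v_i=(i+1)v_{i+1}$, $e.v_i=(d-i+1)v_{i-1}$, $v_{-1}=v_{d+1}=0$; $\varphi_d$ is the corresponding representation. Put $x^*=h-e+f$, $y^*=f$ (nilpotent) and $P=\exp(\varphi_d(x^* ))\exp(\varphi_d(y^* ))$, where $\exp(\varphi_d(u))=\sum_n\varphi_d(u)^n/n!$. *)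

(* Defs.v *)
From HB Require Import structures.
From mathcomp Require Import all_boot all_order all_algebra.
Set Implicit Arguments. Unset Strict Implicit. Unset Printing Implicit Defensive.
Import GRing.Theory.
Local Open Scope ring_scope.

(* Matrices of phi_d : sl2 -> gl(V(d)) w.r.t. the standard basis v_0..v_d.
   Column j is the coordinate vector of (x . v_j). *)
Definition phi_h (F : fieldType) (d : nat) : 'M[F]_(d.+1) :=
  \matrix_(i, j) (if i == j :> nat then (d%:R - (2 * j)%:R) else 0).
Definition phi_f (F : fieldType) (d : nat) : 'M[F]_(d.+1) :=
  \matrix_(i, j) (if i == j.+1 :> nat then (j.+1)%:R else 0).
Definition phi_e (F : fieldType) (d : nat) : 'M[F]_(d.+1) :=
  \matrix_(i, j) (if i.+1 == j :> nat then (d.+1 - j)%:R else 0).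

Definition phi_xs (F : fieldType) (d : nat) : 'M[F]_(d.+1) :=
  phi_h F d - phi_e F d + phi_f F d.
Definition phi_ys (F : fieldType) (d : nat) : 'M[F]_(d.+1) := phi_f F d.

(* For a nilpotent (d+1)x(d+1) matrix A one has
   A^(d+1) = 0, so the series is the finite sum over n <= d; we use it only
   for the nilpotent matrices phi_d(x^* ), phi_d(y^* ). *)
Definition mexp (F : fieldType) (d : nat) (A : 'M[F]_(d.+1)) : 'M[F]_(d.+1) :=
  \sum_(n < d.+1) (n`!%:R)^-1 *: A ^+ n.

Definition Pmx (F : fieldType) (d : nat) : 'M[F]_(d.+1) :=
  mexp (phi_xs F d) * mexp (phi_ys F d).

Definition sv (F : fieldType) (d : nat) (i : 'I_d.+1) : 'cV[F]_(d.+1) :=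
  delta_mx i 0.

Arguments phi_h F d : clear implicits.
Arguments phi_f F d : clear implicits.
Arguments phi_e F d : clear implicits.
Arguments phi_xs F d : clear implicits.
Arguments phi_ys F d : clear implicits.
Arguments Pmx F d : clear implicits.
Arguments sv F d i : clear implicits.

(* Main.v *)
From Stdlib Require Import Lia.
Require Import Defs.
From HB Require Import structures.
From mathcomp Require Import all_boot all_order all_algebra.
Import GRing.Theory.
Local Open Scope ring_scope.

Definition mxG (F : fieldType) n m (G : nat -> nat -> F) : 'M[F]_(n, m) :=
  \matrix_(i, j) G i j.
Arguments mxG {F} n m G.

Lemma sum_pick (F : fieldType) n m (G : nat -> F) :
  \sum_(k < n) (if (k : nat) == m then G k else 0) = if (m < n)%N then G m else 0.
Proof.
case: ltnP => Hm.
  rewrite (bigD1 (Ordinal Hm)) //= eqxx big1 ?addr0 // => k Hk.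
  case: eqP => // Ek; case/eqP: Hk; exact: val_inj.
rewrite big1 // => k _; case: eqP => // Ek.
by move: (ltn_ord k); rewrite Ek ltnNge Hm.
Qed.
Arguments sum_pick {F} n m G.

Lemma mulh (F : fieldType) d m (M : 'M[F]_(d.+1, m)) i j :
  (phi_h F d *m M) i j = (d%:R - (2 * i)%:R) * M i j.
Proof.
rewrite mxE (bigD1 i) //= mxE eqxx big1 ?addr0 // => k Hk.
rewrite mxE; case: eqP => [E|_]; last by rewrite mul0r.
by case/eqP: Hk; apply: val_inj.
Qed.

Lemma mulf (F : fieldType) d m (G : nat -> nat -> F) (i : 'I_d.+1) (j : 'I_m) :
  (phi_f F d *m mxG d.+1 m G) i j = (i : nat)%:R * G (i.-1) j.
Proof.
rewrite mxE.
case: i => [[|i] Hi] /=.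
  by rewrite mul0r big1 // => k _; rewrite !mxE /= mul0r.
rewrite (eq_bigr (fun k : 'I_d.+1 => if (k : nat) == i then (i.+1)%:R * G i j else 0)).
  by rewrite (sum_pick _ _ (fun _ => (i.+1)%:R * G i j)) ltnW.
move=> k _; rewrite !mxE /= eqSS eq_sym.
by case: eqP => [->|_]; rewrite ?mul0r.
Qed.

Lemma mule (F : fieldType) d m (G : nat -> nat -> F) (i : 'I_d.+1) (j : 'I_m) :
  (phi_e F d *m mxG d.+1 m G) i j = (d - i)%:R * G (i.+1) j.
Proof.
rewrite mxE.
rewrite (eq_bigr (fun k : 'I_d.+1 => if (k : nat) == i.+1 then (d - i)%:R * G i.+1 j else 0)).
  rewrite (sum_pick _ _ (fun _ => (d - i)%:R * G i.+1 j)) ltnS; case: ltnP => //= Hi;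
  have -> : (d - i = 0)%N by apply/eqP; rewrite subn_eq0.
  by rewrite mul0r.
move=> k _; rewrite !mxE /= eq_sym.
case: eqP => [E|_]; last by rewrite mul0r.
by rewrite E subSS.
Qed.

Lemma mulfr (F : fieldType) d m (G : nat -> nat -> F) (i : 'I_m) (j : 'I_d.+1) :
  G i d.+1 = 0 ->
  (mxG m d.+1 G *m phi_f F d) i j = (j.+1)%:R * G i j.+1.
Proof.
move=> HG; rewrite mxE.
rewrite (eq_bigr (fun k : 'I_d.+1 => if (k : nat) == j.+1 then (j.+1)%:R * G i j.+1 else 0)).
  rewrite (sum_pick _ _ (fun _ => (j.+1)%:R * G i j.+1)) ltnS; case: ltnP => //= Hj.
  have -> : (j : nat) = d by apply/eqP; rewrite eqn_leq Hj -ltnS ltn_ord.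
  by rewrite HG mulr0.
move=> k _; rewrite !mxE /=.
case: eqP => [E|_]; last by rewrite mulr0.
by rewrite E mulrC.
Qed.

Ltac nlia := rewrite -?plusE -?minusE -?multE; lia.

Definition wv (F : fieldType) d (a b : F) : 'cV[F]_(d.+1) :=
  mxG d.+1 1 (fun i _ => a ^+ (d - i) * b ^+ i).
Arguments wv {F} d a b.

Lemma fpow (F : fieldType) d (a b : F) k :
  phi_f F d ^+ k *m wv d a b =
  mxG d.+1 1 (fun i _ => (k`!)%:R * 'C(i, k)%:R * (a ^+ (d - i + k) * b ^+ (i - k))).
Proof.
elim: k => [|k IH].
  rewrite expr0 mul1mx; apply/matrixP => i j; rewrite !mxE.
  by rewrite bin0 fact0 mulr1n !mul1r addn0 subn0.
rewrite exprS -[_ * _]/(mulmx _ _) -mulmxA IH.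
apply/matrixP => i j; rewrite mulf [in RHS]mxE.
case: i => [[|i] Hi] /=.
  by rewrite !bin0n /= !mulr0n mulr0 mul0r; exact: mul0r.
rewrite mulrA -!natrM.
have -> : (i.+1 * (k`! * 'C(i, k)) = k.+1`! * 'C(i.+1, k.+1))%N.
  by rewrite mulnCA (mul_bin_diag i.+1 k) factS mulnCA mulnA.
move/ltP: Hi => Hi; congr (_ * (_ ^+ _ * _ ^+ _)); nlia.
Qed.

Lemma epow (F : fieldType) d (a b : F) k :
  phi_e F d ^+ k *m wv d a b =
  mxG d.+1 1 (fun i _ => (k`!)%:R * 'C(d - i, k)%:R * (a ^+ (d - i - k) * b ^+ (i + k))).
Proof.
elim: k => [|k IH].
  rewrite expr0 mul1mx; apply/matrixP => i j; rewrite !mxE.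
  by rewrite bin0 fact0 mulr1n !mul1r addn0 subn0.
rewrite exprS -[_ * _]/(mulmx _ _) -mulmxA IH.
apply/matrixP => i j; rewrite mule [in RHS]mxE.
rewrite mulrA -!natrM.
have -> : ((d - i) * (k`! * 'C(d - i.+1, k)) = k.+1`! * 'C(d - i, k.+1))%N.
  by rewrite mulnCA subnS mul_bin_diag factS mulnCA mulnA.
congr (_ * (_ ^+ _ * _ ^+ _)); nlia.
Qed.

Lemma fact_neq (F : fieldType) (hF : [pchar F] =i pred0) k : (k`!%:R : F) != 0.
Proof. by rewrite ((pcharf0P F).1 hF) -lt0n fact_gt0. Qed.

Lemma mexp_mul (F : fieldType) d (A : 'M[F]_(d.+1)) (v : 'cV[F]_(d.+1)) :
  mexp A *m v = \sum_(k < d.+1) ((k`!%:R)^-1 *: (A ^+ k *m v)).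
Proof. by rewrite /mexp mulmx_suml; apply: eq_bigr => k _; rewrite scalemxAl. Qed.

Lemma Lw (F : fieldType) (hF : [pchar F] =i pred0) d (a b : F) :
  mexp (phi_ys F d) *m wv d a b = wv d a (a + b).
Proof.
rewrite mexp_mul; apply/matrixP => i j; rewrite summxE [in RHS]mxE.
rewrite (eq_bigr (fun k : 'I_d.+1 => 'C(i,k)%:R * (a^+(d-i+k) * b^+(i-k)))); last first.
  by move=> k _; rewrite /phi_ys fpow !mxE !mulrA mulVf ?mul1r // fact_neq.
rewrite addrC exprDn mulr_sumr.
rewrite (big_ord_widen d.+1 (fun k => a^+(d-i) * (b^+(i-k) * a^+k *+ 'C(i,k)))) ?ltn_ord //.
rewrite [RHS]big_mkcond; apply: eq_bigr => k _; case: ltnP => H.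
  rewrite exprD -[in RHS]mulr_natl [in RHS]mulrCA -!mulrA; congr (_ * (_ * _)); exact: mulrC.
rewrite bin_small //; exact: mul0r.
Qed.

Lemma Ew (F : fieldType) (hF : [pchar F] =i pred0) d (a b : F) :
  mexp (phi_e F d) *m wv d a b = wv d (a + b) b.
Proof.
rewrite mexp_mul; apply/matrixP => i j; rewrite summxE [in RHS]mxE.
rewrite (eq_bigr (fun k : 'I_d.+1 => 'C(d-i,k)%:R * (a^+(d-i-k) * b^+(i+k)))); last first.
  by move=> k _; rewrite epow !mxE !mulrA mulVf ?mul1r // fact_neq.
rewrite exprDn mulr_suml.
rewrite (big_ord_widen d.+1 (fun k => (a^+(d-i-k) * b^+k *+ 'C(d-i,k)) * b^+i)); last first.
  by rewrite ltnS leq_subr.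
rewrite [RHS]big_mkcond; apply: eq_bigr => k _; case: ltnP => H.
  rewrite exprD -[in RHS]mulr_natl -!mulrA; congr (_ * (_ * _)).
  by rewrite mulrC.
rewrite bin_small //; exact: mul0r.
Qed.

Lemma epowM (F : fieldType) d k :
  phi_e F d ^+ k = mxG d.+1 d.+1 (fun i j => if (j == i + k)%N then (k`!)%:R * 'C(d - i, k)%:R else 0).
Proof.
elim: k => [|k IH].
  rewrite expr0; apply/matrixP => i j; rewrite !mxE addn0 eq_sym.
  case: eqP => [E|]; last by case: eqP => // E1 E2; case: E2; exact: val_inj.
  by rewrite (_ : i = j) ?eqxx ?bin0 ?mulr1 //; exact: val_inj.
rewrite exprS -[_ * _]/(mulmx _ _) IH.
apply/matrixP => i j; rewrite mule [in RHS]mxE addSnnS.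
case: eqP => _; last by rewrite mulr0.
rewrite mulrA -!natrM -mulnA.
suff -> : ((d - i) * (k`! * 'C(d - i.+1, k)) = k.+1`! * 'C(d - i, k.+1))%N by [].
by rewrite mulnCA subnS mul_bin_diag factS mulnCA mulnA.
Qed.

Local Open Scope nat_scope.
Definition Gn d i j := if (i <= j)%N then 'C(d - i, j - i) else 0%N.

Lemma keyA (i m r : nat) : r <= m ->
 (i + m) * 'C(m, r) + i * 'C(m.+1, r.+1) =
 2 * i * 'C(m, r) + m * (if r is 0 then 0 else 'C(m.-1, r.-1)) + (i + r).+1 * 'C(m, r.+1).
Proof.
move=> Hrm.
have H1 := mul_bin_diag m r.
have H2 := mul_bin_down m r.
have H3 : m * (if r is 0 then 0 else 'C(m.-1, r.-1)) = r * 'C(m, r).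
  by case: r {H1 H2 Hrm} => [|r]; [rewrite muln0 | exact: mul_bin_diag].
rewrite binS H3.
move: H1 H2 H3; move: ('C(m, r)) ('C(m, r.+1)) ('C(m.-1, r)) => X Y Z.
move/leP: Hrm => Hrm.
rewrite -!plusE -!minusE -!multE => H1 H2 H3.
nia.
Qed.

Lemma keyid (d i j : nat) : i <= d -> j <= d ->
  d * Gn d i j + i * Gn d i.-1 j = 2 * i * Gn d i j + (d - i) * Gn d i.+1 j + j.+1 * Gn d i j.+1.
Proof.
move=> Hi Hj; rewrite /Gn.
case: (leqP i j) => Hij.
  rewrite (leq_trans Hij (leqnSn j)).
  have Hm := subnKC Hi. have Hr := subnKC Hij.
  move: (d - i) (j - i) Hm Hr => m r Hm Hr.
  subst d j.
  have Hrm : r <= m by rewrite -(leq_add2l i).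
  rewrite -addnS addKn.
  have -> : (i < i + r) = (0 < r) by rewrite -{1}(addn0 i) ltn_add2l.
  have E1 : i * (if i.-1 <= i + r then 'C(i + m - i.-1, i + r - i.-1) else 0) = i * 'C(m.+1, r.+1).
    case: i {Hj Hi Hij} => [|i] //=; rewrite (leq_trans (leqnSn i) (leq_addr r _)).
    by congr (_ * 'C(_, _)); nlia.
  have E2 : m * (if 0 < r then 'C(i + m - i.+1, i + r - i.+1) else 0) =
     m * (if r is 0 then 0 else 'C(m.-1, r.-1)).
    case: r {Hrm Hj Hij E1} => [|r] //=.
    by congr (_ * 'C(_, _)); nlia.
  by rewrite E1 E2 keyA // addnS.
have -> : (i < j) = false by apply/negbTE; rewrite -leqNgt ltnW.
rewrite !muln0 !add0n ?addn0.
case: (ltngtP i j.+1) => Hi2.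
- by rewrite ltnS leqNgt Hij in Hi2.
- have -> : (i.-1 <= j) = false.
    by apply/negbTE; rewrite -ltnNge; apply/ltP; move/ltP: Hi2 => ?; nlia.
  by rewrite !muln0.
- by subst i; rewrite /= leqnn !subnn !bin0.
Qed.

Local Open Scope ring_scope.
Lemma shuffle (R : zmodType) (a b c e f : R) : a + e = b + c + f -> a - b - c + e = f.
Proof.
move=> H; rewrite addrAC [a - b + e]addrAC H -addrA -opprD.
by rewrite [_ + f]addrC addrK.
Qed.

Lemma mexpE (F : fieldType) (hF : [pchar F] =i pred0) d :
  mexp (phi_e F d) = mxG d.+1 d.+1 (fun i j => (Gn d i j)%:R).
Proof.
apply/matrixP => i j; rewrite /mexp summxE [in RHS]mxE /Gn.
rewrite (eq_bigr (fun k : 'I_d.+1 => if (k : nat) == (if (i <= j)%N then (j - i)%N else d.+1)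
     then 'C(d - i, k)%:R else 0)); last first.
  move=> k _; rewrite epowM !mxE.
  case: (leqP i j) => Hij.
    have -> : ((j : nat) == i + k)%N = ((k : nat) == j - i)%N.
      by rewrite -(eqn_add2l i k (j - i)) subnKC // eq_sym.
    case: eqP => _; last by rewrite mulr0.
    by rewrite mulrA mulVf ?mul1r // fact_neq.
  have -> : ((j : nat) == i + k)%N = false.
    by apply/negbTE; rewrite neq_ltn (leq_trans Hij) // leq_addr.
  by rewrite mulr0 (ltn_eqF (ltn_ord k)).
rewrite (sum_pick _ _ (fun k => 'C(d - i, k)%:R)).
case: (leqP i j) => Hij; last by rewrite ltnn.
by rewrite (leq_ltn_trans (leq_subr i j) (ltn_ord j)).
Qed.

Lemma conjE (F : fieldType) (hF : [pchar F] =i pred0) d :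
  phi_xs F d *m mexp (phi_e F d) = mexp (phi_e F d) *m phi_f F d.
Proof.
rewrite (mexpE _ hF) /phi_xs mulmxDl mulmxBl.
set M := mxG _ _ _.
have Hh : phi_h F d *m M = \matrix_(i, j) ((d%:R - (2 * i)%:R) * (Gn d i j)%:R).
  by apply/matrixP => i j; rewrite mulh !mxE.
have He : phi_e F d *m M = \matrix_(i, j) ((d - i)%:R * (Gn d i.+1 j)%:R).
  by apply/matrixP => i j; rewrite mule !mxE.
have Hf : phi_f F d *m M = \matrix_(i, j) ((i : nat)%:R * (Gn d i.-1 j)%:R).
  by apply/matrixP => i j; rewrite mulf !mxE.
have Hfr : M *m phi_f F d = \matrix_(i, j) ((j.+1)%:R * (Gn d i j.+1)%:R).
  apply/matrixP => i j; rewrite mulfr ?mxE //.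
  rewrite /Gn; case: leqP => // Hi.
  by rewrite bin_small // subSn ?ltnSn // -ltnS.
rewrite Hh He Hf Hfr; apply/matrixP => i j; rewrite !mxE.
rewrite mulrBl; apply: shuffle; rewrite -!natrM -!natrD; congr (_%:R).
by rewrite keyid // -ltnS.
Qed.

Lemma XE (F : fieldType) (hF : [pchar F] =i pred0) d :
  mexp (phi_xs F d) *m mexp (phi_e F d) = mexp (phi_e F d) *m mexp (phi_f F d).
Proof.
have Hk : forall k, phi_xs F d ^+ k *m mexp (phi_e F d) = mexp (phi_e F d) *m phi_f F d ^+ k.
  elim=> [|k IH]; first by rewrite !expr0 mul1mx mulmx1.
  rewrite !exprS -![_ * _]/(mulmx _ _) -mulmxA IH mulmxA conjE // mulmxA.
  by [].
rewrite {1}/mexp mulmx_suml [in RHS]/mexp mulmx_sumr; apply: eq_bigr => k _.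
by rewrite -scalemxAl Hk scalemxAr.
Qed.

Lemma Xw (F : fieldType) (hF : [pchar F] =i pred0) d (a b : F) :
  mexp (phi_xs F d) *m wv d (a + b) b = wv d (a + (a + b)) (a + b).
Proof.
rewrite -(Ew _ hF) mulmxA XE // -mulmxA.
by rewrite -[phi_f F d]/(phi_ys F d) Lw // Ew.
Qed.

Lemma Pw (F : fieldType) (hF : [pchar F] =i pred0) d (a b : F) :
  Pmx F d *m wv d a b = wv d (a - b) a.
Proof.
rewrite /Pmx -[_ * _]/(mulmx _ _) -mulmxA Lw //.
have -> : wv d a (a + b) = wv d (- b + (a + b)) (a + b).
  by rewrite [a + b]addrC addKr.
rewrite Xw // [a + b]addrC addKr.
by rewrite addrC.
Qed.

Lemma sv0 (F : fieldType) d : sv F d 0 = wv d 1 0.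
Proof.
apply/matrixP => i j; rewrite !mxE expr1n mul1r expr0n (ord1 j) eqxx andbT.
by [].
Qed.

Lemma svsum (F : fieldType) d : \sum_(i < d.+1) sv F d i = wv d 1 1.
Proof.
apply/matrixP => i j; rewrite summxE [in RHS]mxE !expr1n mulr1 (ord1 j).
rewrite (bigD1 i) //= big1 ?addr0; first by rewrite mxE !eqxx.
by move=> k Hk; rewrite mxE eq_sym (negbTE Hk).
Qed.

Theorem corollary8p14 (F : fieldType) (charF0 : [pchar F] =i pred0) (d : nat) :
  let P := Pmx F d in
  [/\ P *m sv F d 0 = \sum_(i < d.+1) sv F d i,
      (P * P) *m sv F d 0 = \sum_(i < d.+1) P *m sv F d i
    & (-1) ^+ d *: sv F d 0 = \sum_(i < d.+1) (P * P) *m sv F d i].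
Proof.
move=> P.
have H1 : P *m sv F d 0 = \sum_(i < d.+1) sv F d i.
  by rewrite sv0 svsum /P Pw // subr0.
split => //.
  by rewrite -mulmx_sumr -H1 -[P * P]/(P *m P) mulmxA.
rewrite -mulmx_sumr svsum -[P * P]/(P *m P) -mulmxA /P !Pw // subrr sub0r sv0.
apply/matrixP => i j; rewrite !mxE expr1n mul1r expr0n.
case: (eqVneq (i : nat) 0%N) => [->|Hi]; first by rewrite subn0.
by rewrite /= !mulr0n !mulr0.
Qed.
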